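(* Let $m>1$ and $n_1,\ldots,n_m>1$. Then the cone $\mathscr{P}_{\mathbb{C}}^{[n_1,\ldots,n_m]}$ is proper, while the cone $\mathscr{P}_{\mathbb{R}}^{[n_1,\ldots,n_m]}$ is solid but not pointed.
   Context: $\mathbb{C}^{[n_1,\ldots,n_m]}$ is the real vector space of tensors $\mathcal{H}\in\mathbb{C}^{n_1\times\cdots\times n_m\times n_1\times\cdots\times n_m}$ with $\mathcal{H}_{i_1\ldots i_m j_1\ldots j_m}=\overline{\mathcal{H}_{j_1\ldots j_m i_1\ldots i_m}}$; $\mathbb{R}^{[n_1,\ldots,n_m]}$ is its subset of real tensors. For $\mathbb{F}\in\{\mathbb{R},\mathbb{C}\}$, $\mathscr{P}_{\mathbb{F}}^{[n_1,\ldots,n_m]}:=\{\mathcal{H}\in\mathbb{F}^{[n_1,\ldots,n_m]}:\langle\mathcal{H},x_1\otimes\cdots\otimes x_m\otimes\overline{x_1}\otimes\cdots\otimes\overline{x_m}\rangle\ge0\ \forall x_i\in\mathbb{F}^{n_i}\}$, where $\langle\mathcal{A},\mathcal{B}\rangle=\sum\mathcal{A}_{\cdot}\overline{\mathcal{B}_{\cdot}}$. A closed convex cone in the real vector space $\mathbb{F}^{[n_1,\ldots,n_m]}$ is solid if it has nonempty interior, pointed if it contains no line through the origin, and proper if it is both. *)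

(* Defs.v *)
From HB Require Import structures.
From mathcomp Require Import all_boot all_order all_algebra.
From mathcomp Require Import complex.
From mathcomp Require Import reals.
Set Implicit Arguments. Unset Strict Implicit. Unset Printing Implicit Defensive.
Import Order.TTheory GRing.Theory Num.Theory.
Local Open Scope ring_scope.
Local Open Scope complex_scope.

Section Defs.
Variable R : realType.
Variable m : nat.
Variable n : 'I_m -> nat.

Definition mindex := {dffun forall k : 'I_m, 'I_(n k)}.

(* tensors in C^{n_1 x ... x n_m x n_1 x ... x n_m}, entry H_{i_1..i_m j_1..j_m}
   is  H i j  with i, j multi-indices *)
Definition tensor := mindex -> mindex -> R[i].

Definition vecs := forall k : 'I_m, 'I_(n k) -> R[i].

Definition is_realc (z : R[i]) : Prop := z^* = z.

(* membership in F^{[n_1..n_m]}; realF = true means F = R *)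
Definition herm_space (realF : bool) (H : tensor) : Prop :=
  (forall i j, H i j = (H j i)^*) /\
  (realF -> forall i j, is_realc (H i j)).

Definition admissible (realF : bool) (x : vecs) : Prop :=
  realF -> forall k l, is_realc (x k l).

(* <H, x_1 (x) ... (x) x_m (x) conj x_1 (x) ... (x) conj x_m>
   with <A,B> = sum A * conj B *)
Definition pairing (H : tensor) (x : vecs) : R[i] :=
  \sum_(i : mindex) \sum_(j : mindex)
    H i j * (\prod_(k < m) (x k (i k))^*) * (\prod_(k < m) x k (j k)).

Definition Pcone (realF : bool) (H : tensor) : Prop :=
  herm_space realF H /\
  forall x : vecs, admissible realF x -> 0 <= pairing H x.

(* sup-norm distance between tensors is < e  (any norm on the finite
   dimensional real vector space F^{[n]} induces the same topology) *)
Definition near_t (H H' : tensor) (e : R) : Prop :=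
  forall i j, `|H i j - H' i j| < e%:C.

Definition tscale (t : R) (H : tensor) : tensor := fun i j => t%:C * H i j.
Definition tadd (H H' : tensor) : tensor := fun i j => H i j + H' i j.
Definition tzero : tensor := fun _ _ => 0.

Definition convex_cone (realF : bool) (K : tensor -> Prop) : Prop :=
  (forall H, K H -> herm_space realF H) /\
  (forall H H' (a b : R), K H -> K H' -> 0 <= a -> 0 <= b ->
      K (tadd (tscale a H) (tscale b H'))).

Definition closed_in (realF : bool) (K : tensor -> Prop) : Prop :=
  forall H, herm_space realF H -> ~ K H ->
    exists2 e : R, 0 < e & forall H', herm_space realF H' -> near_t H' H e -> ~ K H'.

Definition solid (realF : bool) (K : tensor -> Prop) : Prop :=
  exists H, K H /\
    exists2 e : R, 0 < e & forall H', herm_space realF H' -> near_t H' H e -> K H'.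

Definition pointed (K : tensor -> Prop) : Prop :=
  ~ (exists D : tensor, D <> tzero /\ forall t : R, K (tscale t D)).

Definition closed_convex_cone (realF : bool) (K : tensor -> Prop) : Prop :=
  convex_cone realF K /\ closed_in realF K.

Definition proper_cone (realF : bool) (K : tensor -> Prop) : Prop :=
  closed_convex_cone realF K /\ solid realF K /\ pointed K.

End Defs.

(* Main.v *)
Require Import Defs.
From HB Require Import structures.
From mathcomp Require Import all_boot all_order all_algebra.
From mathcomp Require Import complex reals.
From mathcomp Require Import ring lra.
From Stdlib Require Import Classical FunctionalExtensionality.
Import Order.TTheory GRing.Theory Num.Theory.
Local Open Scope ring_scope.
Local Open Scope complex_scope.
Section S.
Variables (R : realType) (m : nat) (n : 'I_m -> nat).
Notation RE := (@complex.Re R).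
Notation IM := (@complex.Im R).
Notation MI := (@mindex m n).
Notation TT := (@tensor R m n).
Notation VV := (@vecs R m n).
Definition nr (z : R[i]) : R := Num.sqrt (RE z ^+ 2 + IM z ^+ 2).
Lemma normE (z : R[i]) : `|z| = (nr z)%:C.
Proof. by rewrite normc_def. Qed.

Definition Pc (x : VV) (i : MI) : R[i] := \prod_(k < m) (x k (i k))^*.
Definition Qc (x : VV) (i : MI) : R[i] := \prod_(k < m) x k (i k).
Definition F (D : TT) (u v : VV) := \sum_(i : MI) \sum_(j : MI) D i j * Pc u i * Qc v j.

Lemma pairingE D x : pairing D x = F D x x. Proof. by []. Qed.

Lemma Pc_conj x i : Pc x i = (Qc x i)^*.
Proof. by rewrite /Pc /Qc rmorph_prod. Qed.

Lemma pairing_lin (H H' : TT) a b x : pairing (tadd (tscale a H) (tscale b H')) x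
  = a%:C * pairing H x + b%:C * pairing H' x.
Proof.
rewrite /pairing !mulr_sumr -big_split /=; apply eq_bigr => i _.
rewrite !mulr_sumr -big_split; apply eq_bigr => j _; rewrite /tadd /tscale /=; ring.
Qed.

Lemma pairing_sub (H H' : TT) x : pairing (fun i j => H i j - H' i j) x
  = pairing H x - pairing H' x.
Proof.
rewrite /pairing -sumrB; apply eq_bigr => i _.
rewrite -sumrB; apply eq_bigr => j _; ring.
Qed.

Lemma pairing_conj (H : TT) x : (forall i j, H i j = (H j i)^*) ->
  (pairing H x)^* = pairing H x.
Proof.
move=> hH; rewrite /pairing rmorph_sum; under eq_bigr do rewrite rmorph_sum.
rewrite exchange_big /=; apply eq_bigr => j _; apply eq_bigr => i _.
rewrite !rmorphM /= !rmorph_prod /= (hH i j) conjcK; under eq_bigr do rewrite conjcK.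
ring.
Qed.

Lemma nr_conj z : nr z^* = nr z.
Proof. by case: z => a b; rewrite /nr /= sqrrN. Qed.

Lemma conj_mul z : z^* * z = (nr z ^+ 2)%:C.
Proof.
case: z => a b; rewrite /nr /= sqr_sqrtr ?addr_ge0 ?sqr_ge0 //.
apply/eqP; rewrite eq_complex /=; apply/andP; split; apply/eqP; ring.
Qed.

Lemma nr_ge0 z : 0 <= nr z. Proof. exact: sqrtr_ge0. Qed.

Lemma nr_Re z : `|RE z| <= nr z.
Proof.
case: z => a b; rewrite /nr /= -sqrtr_sqr ler_sqrt ?addr_ge0 ?sqr_ge0 //.
by rewrite lerDl sqr_ge0.
Qed.
Lemma nr_Im z : `|IM z| <= nr z.
Proof.
case: z => a b; rewrite /nr /= -sqrtr_sqr ler_sqrt ?addr_ge0 ?sqr_ge0 //.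
by rewrite lerDr sqr_ge0.
Qed.

Lemma pair_bound (E : TT) x e : (forall i j, nr (E i j) <= e) ->
  nr (pairing E x) <= e * \sum_i \sum_j nr (Pc x i) * nr (Qc x j).
Proof.
move=> hE.
have h : `|pairing E x| <= e%:C * \sum_i \sum_j `|Pc x i| * `|Qc x j|.
  rewrite mulr_sumr; apply: le_trans (ler_norm_sum _ _ _) _; apply: ler_sum => i _.
  rewrite mulr_sumr; apply: le_trans (ler_norm_sum _ _ _) _; apply: ler_sum => j _.
  rewrite !normrM mulrA; apply: ler_wpM2r; first exact: normr_ge0.
  apply: ler_wpM2r; first exact: normr_ge0.
  by rewrite normE lecR.
move: h; have -> : e%:C * \sum_i \sum_j `|Pc x i| * `|Qc x j| =
   (e * \sum_i \sum_j nr (Pc x i) * nr (Qc x j))%:C.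
  rewrite rmorphM rmorph_sum /=; congr (_ * _); apply: eq_bigr => i _.
  rewrite rmorph_sum /=; apply: eq_bigr => j _; by rewrite rmorphM /= !normE.
by rewrite normE lecR.
Qed.

Lemma ReB (a b : R[i]) : RE (a - b) = RE a - RE b.
Proof. by case: a; case: b. Qed.
Lemma ImB (a b : R[i]) : IM (a - b) = IM a - IM b.
Proof. by case: a; case: b. Qed.
Lemma ReD (a b : R[i]) : RE (a + b) = RE a + RE b.
Proof. by case: a; case: b. Qed.
Lemma ImD (a b : R[i]) : IM (a + b) = IM a + IM b.
Proof. by case: a; case: b. Qed.

Lemma ge0E (z : R[i]) : (0 <= z) = (IM z == 0) && (0 <= RE z).
Proof. by rewrite lecE. Qed.

Lemma Pcone_closed rF : closed_in rF (@Pcone R m n rF).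
Proof.
move=> H hH hnot.
have [x [hx hp]] : exists x, admissible rF x /\ ~ (0 <= pairing H x).
  apply: NNPP => hc; apply: hnot; split => // x hx; apply: NNPP => hp.
  by apply: hc; exists x.
set p := pairing H x in hp.
set d := Num.max `|IM p| (- RE p).
have hd : 0 < d.
  move: hp; rewrite ge0E /d lt_max => hp.
  case: (eqVneq (IM p) 0) => hi.
    by apply/orP; right; move: hp; rewrite hi eqxx /= oppr_gt0 ltNge => /negP.
  by apply/orP; left; rewrite normr_gt0.
set M := \sum_i \sum_j nr (Pc x i) * nr (Qc x j).
have hM : 0 <= M.
  by apply: sumr_ge0 => i _; apply: sumr_ge0 => j _; apply: mulr_ge0; apply: nr_ge0.
exists (d / (M + 1)); first by apply: divr_gt0 => //; apply: ltr_wpDl.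
move=> H' _ hnear [_ hc]; have hp' := hc x hx.
have hb : nr (pairing H' x - p) <= d / (M + 1) * M.
  rewrite /p -pairing_sub; apply: pair_bound => i j.
  by have := hnear i j; rewrite normE ltcR => /ltW.
have hlt : d / (M + 1) * M < d.
  rewrite mulrAC ltr_pdivrMr ?ltr_wpDl // mulrDr mulr1 ltrDl //.
have h1 := nr_Im (pairing H' x - p); have h2 := nr_Re (pairing H' x - p).
move: hp'; rewrite ge0E => /andP [/eqP hi hr].
rewrite ImB hi sub0r normrN in h1; rewrite ReB in h2.
have h3 : - RE p < d.
  have := ler_norm (RE (pairing H' x) - RE p). lra.
have h4 : `|IM p| < d by lra.
have : d < d by rewrite {1}/d gt_max h3 h4.
by rewrite ltxx.
Qed.

Lemma Pcone_convex rF : convex_cone rF (@Pcone R m n rF).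
Proof.
split; first by move=> H [].
move=> H H' a b [hH hp] [hH' hp'] ha hb; split.
  case: hH => s r; case: hH' => s' r'; split.
    by move=> i j; rewrite /tadd /tscale rmorphD !rmorphM /= oppr0 -s -s'.
  move=> hr i j; rewrite /is_realc /tadd /tscale rmorphD !rmorphM /= oppr0.
  by rewrite (r hr i j) (r' hr i j).
move=> x hx; rewrite pairing_lin; apply: addr_ge0; apply: mulr_ge0;
  rewrite ?ler0c //; [exact: hp | exact: hp'].
Qed.

Definition Hid : TT := fun i j => if i == j then 1 else 0.

Lemma PcQc x i : Pc x i * Qc x i = (nr (Qc x i) ^+ 2)%:C.
Proof. by rewrite Pc_conj conj_mul. Qed.

Lemma pairing_Hid x : pairing Hid x = (\sum_i nr (Qc x i) ^+ 2)%:C.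
Proof.
rewrite /pairing rmorph_sum; apply: eq_bigr => i _.
rewrite (bigD1 i) //= [X in _ + X]big1 ?addr0; last first.
  by move=> j hj; rewrite /Hid eq_sym (negbTE hj) !mul0r.
rewrite /Hid eqxx mul1r; exact: PcQc.
Qed.

Definition NN : R := \sum_(i : MI) 1.
Lemma sum_sq (a : MI -> R) : \sum_i \sum_j (a i + a j) = 2 * NN * \sum_i a i.
Proof.
have h1 : forall c : R, \sum_(j : MI) c = c * NN.
  by move=> c; rewrite /NN mulr_sumr; apply: eq_bigr => j _; rewrite mulr1.
under eq_bigr => i _ do rewrite big_split /= h1.
rewrite big_split /= h1 -mulr_suml.
move: (\sum_i a i) NN => s N; ring.
Qed.

Lemma Hid_interior rF : exists2 e : R, 0 < e &
  forall H', herm_space rF H' -> near_t H' Hid e -> @Pcone R m n rF H'.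
Proof.
have hN : 0 <= NN by apply: sumr_ge0 => i _; exact: ler01.
have hN1 : 0 < 2 * NN + 1 by lra.
set e := (2 * NN + 1)^-1.
have he : 0 < e by rewrite invr_gt0.
have he1 : e * (2 * NN + 1) = 1 by rewrite mulVf // gt_eqF.
exists e => // H' hH' hnear; split => // x _.
have hre := pairing_conj H' x (proj1 hH').
rewrite ge0E; apply/andP; split.
  by move: hre; case: (pairing H' x) => a b [] hb; apply/eqP => /=; lra.
set E : TT := fun i j => H' i j - Hid i j.
have hp : pairing H' x = pairing Hid x + pairing E x.
  by rewrite /E pairing_sub addrC subrK.
rewrite hp ReD pairing_Hid /=.
set S := \sum_i nr (Qc x i) ^+ 2.
have hS : 0 <= S by apply: sumr_ge0 => i _; exact: sqr_ge0.
set M := \sum_i \sum_j nr (Pc x i) * nr (Qc x j).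
have hb : nr (pairing E x) <= e * M.
  by apply: pair_bound => i j; move: (hnear i j); rewrite normE ltcR => /ltW.
have hM : M <= 2 * NN * S.
  rewrite /S -sum_sq; apply: ler_sum => i _; apply: ler_sum => j _.
  rewrite Pc_conj nr_conj.
  have := nr_ge0 (Qc x i); have := nr_ge0 (Qc x j); nra.
have hRe := nr_Re (pairing E x).
have h2 : e * M <= e * (2 * NN * S) by apply: ler_wpM2l; [exact: ltW|].
have h3 : e * (2 * NN * S) + e * S = S.
  transitivity (e * (2 * NN + 1) * S); first by ring.
  by rewrite he1 mul1r.
have h4 : 0 <= e * S by apply: mulr_ge0 => //; exact: ltW.
have h5 := ler_norm (- RE (pairing E x)); rewrite normrN in h5.
lra.
Qed.
Definition sel (so : 'I_m) (a w : VV) : VV :=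
  fun k l => if k == so then a k l else w k l.

Lemma F_ext D u u' v v' : (forall k l, u k l = u' k l) -> (forall k l, v k l = v' k l) ->
  F D u v = F D u' v'.
Proof.
move=> hu hv; apply: eq_bigr => i _; apply: eq_bigr => j _; rewrite /Pc /Qc.
by congr (_ * _ * _); apply: eq_bigr => k _; rewrite ?hu ?hv.
Qed.

Definition Cf (D : TT) so (u v : VV) i j :=
  D i j * \prod_(k < m | k != so) (u k (i k))^* * \prod_(k < m | k != so) v k (j k).

Lemma F_sel D so x y u v : F D (sel so x u) (sel so y v) =
  \sum_i \sum_j Cf D so u v i j * (x so (i so))^* * y so (j so).
Proof.
apply: eq_bigr => i _; apply: eq_bigr => j _; rewrite /Pc /Qc /Cf.
rewrite (bigD1 so) //= [X in _ * X = _](bigD1 so) //= /sel !eqxx.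
rewrite [X in _ * (_ * X) * _ = _](eq_bigr (fun k => (u k (i k))^*)); last first.
  by move=> k /negbTE ->.
rewrite [X in _ * (_ * X) = _](eq_bigr (fun k => v k (j k))); last first.
  by move=> k /negbTE ->.
ring.
Qed.

Lemma expand (C : MI -> MI -> R[i]) (al be : MI -> R[i]) c :
  \sum_i \sum_j C i j * (al i + c * be i)^* * (al j + c * be j) =
  \sum_i \sum_j C i j * (al i)^* * al j
  + c * \sum_i \sum_j C i j * (al i)^* * be j
  + c^* * \sum_i \sum_j C i j * (be i)^* * al j
  + c^* * c * \sum_i \sum_j C i j * (be i)^* * be j.
Proof.
rewrite !mulr_sumr -!big_split /=; apply: eq_bigr => i _.
rewrite !mulr_sumr -!big_split /=; apply: eq_bigr => j _.
rewrite rmorphD rmorphM /=; ring.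
Qed.


Lemma conj1' : (1 : R[i])^* = 1.
Proof. by apply/eqP; rewrite eq_complex /= oppr0 !eqxx. Qed.

Lemma conj_i : ('i%C : R[i])^* = - 'i%C.
Proof. by apply/eqP; rewrite eq_complex /= oppr0 !eqxx. Qed.

Lemma F_zero D : (forall x, F D x x = 0) -> forall s, (s <= m)%N ->
  forall u v : VV, (forall (k : 'I_m) l, (s <= k)%N -> u k l = v k l) -> F D u v = 0.
Proof.
move=> h0; elim=> [_ u v huv | s IH hs u v huv].
  by rewrite (F_ext D u u v u) ?h0 // => k l; rewrite huv.
have hs' : (s < m)%N by [].
set so := Ordinal hs'.
set G := fun a b : MI -> R[i] => \sum_i \sum_j Cf D so u v i j * (a i)^* * b j.
have hW : forall w : VV, G (fun i => w so (i so)) (fun i => w so (i so)) = 0.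
  move=> w; rewrite /G -F_sel; apply: IH; first exact: ltnW.
  move=> k l hk; rewrite /sel; case: eqP => // hne; apply: huv.
  rewrite ltn_neqAle hk andbT; apply/eqP => hks; apply: hne; apply: val_inj => /=.
  by rewrite hks.
set al := fun i : MI => u so (i so).
set be := fun i : MI => v so (i so).
have e0 : G al al = 0 := hW u.
have e0' : G be be = 0 := hW v.
have e1 : G al al + 1 * G al be + conjc 1 * G be al + conjc 1 * 1 * G be be = 0.
  rewrite /G -expand; exact: (hW (fun k l => u k l + 1 * v k l)).
have e2 : G al al + 'i * G al be + conjc 'i * G be al + conjc 'i * 'i * G be be = 0.
  rewrite /G -expand; exact: (hW (fun k l => u k l + 'i * v k l)).
rewrite e0 e0' conj1' !mul1r add0r addr0 in e1.
rewrite e0 e0' conj_i add0r !mulr0 addr0 mulNr -mulrBr in e2.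
have hi : ('i : R[i]) != 0 by rewrite eq_complex /= negb_and oner_eq0 orbT.
move/eqP: e2; rewrite mulf_eq0 (negbTE hi) /= subr_eq0 => /eqP e2.
rewrite e2 in e1.
have hA : G be al = 0.
  by apply/eqP; move/eqP: e1; rewrite -mulr2n mulrn_eq0.
rewrite (F_ext D u (sel so u u) v (sel so v v)); last 2 first.
- by move=> k l; rewrite /sel; case: eqP.
- by move=> k l; rewrite /sel; case: eqP.
have hA2 : G al be = 0 by rewrite e2.
by rewrite F_sel; exact: hA2.
Qed.
Definition ev (p : MI) : VV := fun k l => if l == p k then 1 else 0.

Lemma Qc_ev p i : Qc (ev p) i = if i == p then 1 else 0.
Proof.
case: eqP => [-> | hne].
  by apply: big1 => k _; rewrite /ev eqxx.
case: (pickP (fun k => i k != p k)) => [k hk | hall].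
  by rewrite /Qc (bigD1 k) //= /ev (negbTE hk) mul0r.
exfalso; apply: hne; apply/ffunP => k.
by have := hall k; move=> /negbFE /eqP.
Qed.

Lemma Pc_ev p i : Pc (ev p) i = if i == p then 1 else 0.
Proof.
rewrite Pc_conj Qc_ev; case: eqP => _; first exact: conj1'.
by apply/eqP; rewrite eq_complex /= oppr0 !eqxx.
Qed.

Lemma F_ev D p q : F D (ev p) (ev q) = D p q.
Proof.
rewrite /F (bigD1 p) //= [X in _ + X]big1 ?addr0; last first.
  by move=> i hi; apply: big1 => j _; rewrite Pc_ev (negbTE hi) mulr0 mul0r.
rewrite (bigD1 q) //= [X in _ + X]big1 ?addr0; last first.
  by move=> j hj; rewrite Qc_ev (negbTE hj) mulr0.
by rewrite Pc_ev Qc_ev !eqxx !mulr1.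
Qed.

Lemma pairing_scale t (D : TT) x : pairing (tscale t D) x = t%:C * pairing D x.
Proof.
rewrite /pairing mulr_sumr; apply: eq_bigr => i _.
rewrite mulr_sumr; apply: eq_bigr => j _; rewrite /tscale; ring.
Qed.

Lemma pointedC : pointed (@Pcone R m n false).
Proof.
move=> [D [hD ht]]; apply: hD.
have h0 : forall x, F D x x = 0.
  move=> x; have hadm : admissible false x by [].
  have h1 := (proj2 (ht 1)) x hadm; have h2 := (proj2 (ht (-1))) x hadm.
  rewrite pairing_scale in h1; rewrite pairing_scale in h2.
  have e1 : (1 : R)%:C = 1 by [].
  have e2 : (-1 : R)%:C = -1 by apply/eqP; rewrite eq_complex /= oppr0 !eqxx.
  rewrite e1 mul1r in h1; rewrite e2 mulN1r oppr_ge0 in h2.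
  by rewrite -pairingE; apply/eqP; rewrite eq_le h2 h1.
apply: functional_extensionality => p; apply: functional_extensionality => q.
rewrite /tzero -(F_ev D p q); apply: (F_zero D h0 m (leqnn m)) => k l hk.
by move: (ltn_ord k); rewrite ltnNge hk.
Qed.
Section Real.
Hypothesis hm : (1 < m)%N.
Hypothesis hn : forall k, (1 < n k)%N.

Definition k0 : 'I_m := Ordinal (ltnW hm).
Definition k1 : 'I_m := Ordinal hm.
Definition ord01 k (b : bool) : 'I_(n k) := Ordinal (leq_ltn_trans (leq_b1 b) (hn k)).
Definition idx (b0 b1 : bool) : MI :=
  finfun (fun k => ord01 k (if k == k0 then b0 else if k == k1 then b1 else false)).
Definition iA := idx false false.
Definition iB := idx true true.
Definition iC := idx false true.
Definition iE := idx true false.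
Definition ind (a i : MI) : R := if i == a then 1 else 0.
Definition Dr (i j : MI) : R :=
  ind iA i * ind iB j + ind iB i * ind iA j - ind iC i * ind iE j - ind iE i * ind iC j.
Definition Dt : TT := fun i j => (Dr i j)%:C.

Lemma k10 : (k1 == k0) = false. Proof. by []. Qed.

Lemma iAB : iA != iB.
Proof. by apply/eqP => h; have := congr1 (fun f : MI => val (f k0)) h; rewrite !ffunE eqxx. Qed.
Lemma iAC : iA != iC.
Proof. by apply/eqP => h; have := congr1 (fun f : MI => val (f k1)) h; rewrite !ffunE k10 eqxx. Qed.
Lemma iAE : iA != iE.
Proof. by apply/eqP => h; have := congr1 (fun f : MI => val (f k0)) h; rewrite !ffunE eqxx. Qed.

Lemma realC (r : R) : is_realc (r%:C).
Proof. by rewrite /is_realc /= oppr0. Qed.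

Lemma sum_ind (a b : MI) (f g : MI -> R[i]) :
  \sum_i \sum_j (ind a i * ind b j)%:C * f i * g j = f a * g b.
Proof.
rewrite (bigD1 a) //= [X in _ + X]big1 ?addr0; last first.
  move=> i hi; apply: big1 => j _; rewrite /ind (negbTE hi) mul0r.
  by apply/eqP; rewrite eq_complex /= !mul0r !eqxx.
rewrite (bigD1 b) //= [X in _ + X]big1 ?addr0; last first.
  move=> j hj; rewrite /ind (negbTE hj) mulr0.
  by apply/eqP; rewrite eq_complex /= !mul0r !eqxx.
by rewrite /ind !eqxx mulr1 mul1r.
Qed.

Lemma pairing_Dt x : pairing Dt x =
  Pc x iA * Qc x iB + Pc x iB * Qc x iA - Pc x iC * Qc x iE - Pc x iE * Qc x iC.
Proof.
rewrite -!sum_ind /pairing -big_split -!sumrB /=; apply: eq_bigr => i _.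
rewrite -big_split -!sumrB /=; apply: eq_bigr => j _.
rewrite /Dt /Dr !rmorphB !rmorphD /= -/(Pc x i) -/(Qc x j); ring.
Qed.

Lemma realCM (a b : R) : is_realc (a%:C * b%:C).
rewrite /is_realc; apply/eqP; rewrite eq_complex /=; apply/andP; split; apply/eqP; ring. Qed.

Lemma Pc_real x : admissible true x -> forall i, Pc x i = Qc x i.
Proof. by move=> hx i; apply: eq_bigr => k _; apply: hx. Qed.

Lemma QAB x : Qc x iA * Qc x iB = Qc x iC * Qc x iE.
Proof.
rewrite /Qc -!big_split; apply: eq_bigr => k _ /=; rewrite !ffunE.
by case: (k == k0); case: (k == k1) => //=; rewrite mulrC.
Qed.

Lemma notpointedR : ~ pointed (@Pcone R m n true).
Proof.
move=> hp; apply: hp; exists Dt; split.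
  move=> h; have := congr1 (fun f : TT => f iA iB) h; rewrite /Dt /tzero /Dr /ind.
  rewrite eqxx (negbTE iAB) eq_sym (negbTE iAB) (negbTE iAC) (negbTE iAE).
  by case=> /eqP; rewrite eqxx !mul0r !mul1r addr0 !subr0 oner_eq0.
move=> t; split.
  split.
    move=> i j; rewrite /tscale /Dt.
    have -> : Dr j i = Dr i j by rewrite /Dr; ring.
    by symmetry; apply: realCM.
  by move=> _ i j; apply: realCM.
move=> x hx; rewrite pairing_scale pairing_Dt !(Pc_real x hx) .
have e : Qc x iA * Qc x iB + Qc x iB * Qc x iA - Qc x iC * Qc x iE - Qc x iE * Qc x iC = 0.
  by rewrite (mulrC (Qc x iB)) (mulrC (Qc x iE)) (QAB x); ring.
by rewrite e mulr0.
Qed.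
End Real.
End S.

Lemma herm_Hid (R : realType) (m : nat) (n : 'I_m -> nat) rF :
  herm_space rF (@Hid R m n).
Proof.
have c0 : (0 : R[i])^* = 0 by apply/eqP; rewrite eq_complex /= oppr0 !eqxx.
split.
  by move=> i j; rewrite /Hid eq_sym; case: (j == i); rewrite ?conj1' ?c0.
by move=> _ i j; rewrite /is_realc /Hid; case: (i == j); rewrite ?conj1' ?c0.
Qed.

Lemma solid_all (R : realType) (m : nat) (n : 'I_m -> nat) rF :
  solid rF (@Pcone R m n rF).
Proof.
have [e he hint] := Hid_interior R m n rF.
exists (Hid R m n); split; last by exists e.
apply: hint; first exact: herm_Hid.
move=> i j; rewrite subrr normr0 ltcE /= eqxx /=; exact: he.
Qed.

Theorem proposition5p4 (R : realType) (m : nat) (n : 'I_m -> nat) :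
  (1 < m)%N -> (forall k, (1 < n k)%N) ->
  proper_cone false (@Pcone R m n false) /\
  (closed_convex_cone true (@Pcone R m n true) /\
   solid true (@Pcone R m n true) /\
   ~ pointed (@Pcone R m n true)).
Proof.
move=> hm hn; split.
  split; first by split; [exact: Pcone_convex | exact: Pcone_closed].
  by split; [exact: solid_all | exact: pointedC].
split; first by split; [exact: Pcone_convex | exact: Pcone_closed].
by split; [exact: solid_all | exact: notpointedR].
Qed.
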